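(* Suppose the linear system $\dot x = A(t)x$ has a nonuniform exponential dichotomy on $\mathbb{R}_0^+$ with constants $(K,\alpha,\mu)$ and a nonuniform bounded growth on $\mathbb{R}_0^+$ with constants $(K_0,a,\varepsilon)$. Then $$a+\max\{\mu,\varepsilon\}\geq \alpha .$$
   Context: Standing setting: $A\colon\mathbb{R}_0^+=[0,+\infty)\to M_n(\mathbb{R})$ is continuous, $\Phi(t)$ is a fundamental matrix of $\dot x=A(t)x$, and $\Phi(t,s):=\Phi(t)\Phi^{-1}(s)$ is the evolution operator. $|\cdot|$ is a norm on $\mathbb{R}^n$ and $\|\cdot\|$ the induced matrix norm. Nonuniform exponential dichotomy on $\mathbb{R}_0^+$ with constants $(K,\alpha,\mu)$: there exist a projector-valued function $P(\cdot)$ (i.e. $P(t)^2=P(t)$) and constants $K\ge 1$, $\alpha>0$, $0\le\mu<\alpha$ such that for all $t,s\ge 0$: $P(t)\Phi(t,s)=\Phi(t,s)P(s)$; $\|\Phi(t,s)P(s)\|\le Ke^{-\alpha(t-s)+\mu s}$ for $t\ge s$; and $\|\Phi(t,s)(I-P(s))\|\le Ke^{\alpha(t-s)+\mu s}$ for $t\le s$. Nonuniform bounded growth on $\mathbb{R}_0^+$ with constants $(K_0,a,\varepsilon)$: there exist $K_0\ge1$, $a>0$, $\varepsilon\ge0$ with $\|\Phi(t,s)\|\le K_0e^{a|t-s|+\varepsilon s}$ for all $t,s\ge0$. *)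

(* Defs.v *)
From Stdlib Require Import Reals.
From Coquelicot Require Import Coquelicot.
From mathcomp Require Import all_boot all_algebra.
From mathcomp Require Import Rstruct.

Set Implicit Arguments.
Unset Strict Implicit.
Unset Printing Implicit Defensive.

Local Open Scope R_scope.

Definition is_norm (n : nat) (N : 'cV[R]_n -> R) : Prop :=
  (forall x, 0 <= N x) /\
  (forall x, N x = 0 -> x = 0%R) /\
  (forall (c : R) x, N (c *: x)%R = Rabs c * N x) /\
  (forall x y, N (x + y)%R <= N x + N y).

Definition opnorm (n : nat) (N : 'cV[R]_n -> R) (M : 'M[R]_n) : Rbar :=
  Lub_Rbar (fun r => exists x, N x <= 1 /\ r = N (M *m x)%R).

Definition opnorm_le (n : nat) (N : 'cV[R]_n -> R) (M : 'M[R]_n) (C : R) : Prop :=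
  Rbar_le (opnorm N M) (Rbar.Finite C).

Definition continuous_on_Rplus (n : nat) (A : R -> 'M[R]_n) : Prop :=
  forall t, 0 <= t -> forall i j : 'I_n,
    filterlim (fun s => A s i j) (within (fun s => 0 <= s) (locally t))
              (locally (A t i j)).

(* Phi is a fundamental matrix of x' = A(t) x on [0,+oo):
   Phi(t) invertible for all t >= 0, and Phi'(t) = A(t) Phi(t) for t >= 0
   (entrywise derivative of the function restricted to [0,+oo),
    hence one-sided at t = 0). *)
Definition fundamental_matrix (n : nat) (A : R -> 'M[R]_n) (Phi : R -> 'M[R]_n)
  : Prop :=
  (forall t, 0 <= t -> Phi t \in unitmx) /\
  (forall t, 0 <= t -> forall i j : 'I_n,
     filterlim (fun h => (Phi (t + h) i j - Phi t i j) / h)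
               (within (fun h => h <> 0 /\ 0 <= t + h) (locally 0))
               (locally ((A t *m Phi t)%R i j))).

Definition evol (n : nat) (Phi : R -> 'M[R]_n) (t s : R) : 'M[R]_n :=
  (Phi t *m invmx (Phi s))%R.

Definition nonuniform_exp_dichotomy (n : nat) (N : 'cV[R]_n -> R)
  (Phi : R -> 'M[R]_n) (K alpha mu : R) : Prop :=
  exists P : R -> 'M[R]_n,
    1 <= K /\ 0 < alpha /\ 0 <= mu /\ mu < alpha /\
    (forall t, 0 <= t -> (P t *m P t)%R = P t) /\
    (forall t s, 0 <= t -> 0 <= s -> (P t *m evol Phi t s)%R = (evol Phi t s *m P s)%R) /\
    (forall t s, 0 <= s -> s <= t ->
       opnorm_le N (evol Phi t s *m P s)%R (K * exp (- alpha * (t - s) + mu * s))) /\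
    (forall t s, 0 <= t -> t <= s ->
       opnorm_le N (evol Phi t s *m (1%:M - P s))%R (K * exp (alpha * (t - s) + mu * s))).

Definition nonuniform_bounded_growth (n : nat) (N : 'cV[R]_n -> R)
  (Phi : R -> 'M[R]_n) (K0 a eps : R) : Prop :=
  1 <= K0 /\ 0 < a /\ 0 <= eps /\
  (forall t s, 0 <= t -> 0 <= s ->
     opnorm_le N (evol Phi t s) (K0 * exp (a * Rabs (t - s) + eps * s))).

(* Main.v *)
Require Import Defs.
From Stdlib Require Import Reals Lra.
From Coquelicot Require Import Coquelicot.
From mathcomp Require Import all_boot all_algebra.
From mathcomp Require Import Rstruct.

Local Open Scope R_scope.
Set Implicit Arguments.
Lemma norm0 n (N : 'cV[R]_n -> R) : is_norm N -> N 0%R = 0.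
Proof.
move=> [H0 [H1 [H2 H3]]].
have := H2 0 0%R. rewrite GRing.scale0r Rabs_R0 Rmult_0_l. by [].
Qed.
Lemma opnorm_vec n (N : 'cV[R]_n -> R) M C : is_norm N -> opnorm_le N M C ->
  forall x, N (M *m x)%R <= C * N x.
Proof.
move=> HN HM.
have Hb : forall x, N x <= 1 -> N (M *m x)%R <= C.
  move=> x Hx. have [Hub _] := Lub_Rbar_correct (fun r => exists x, N x <= 1 /\ r = N (M *m x)%R).
  have := Hub (N (M *m x)%R) (ex_intro _ x (conj Hx erefl)).
  move=> H; exact: (Rbar_le_trans _ _ _ H HM).
move=> x. have [H0 [H1 [H2 H3]]] := HN.
have [Hp|Hz] := Rle_lt_or_eq_dec _ _ (H0 x); last first.
  have -> : x = 0%R by apply: H1.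
  rewrite mulmx0 (@norm0 _ N HN). lra.
have := Hb ((/ N x) *: x)%R.
rewrite H2 -scalemxAr H2 Rabs_pos_eq; last by left; apply Rinv_0_lt_compat.
rewrite Rinv_l; last lra.
move=> H. have H' := H (Rle_refl 1).
have := Rmult_le_compat_l (N x) _ _ (Rlt_le _ _ Hp) H'.
rewrite -Rmult_assoc Rinv_r; last lra. rewrite Rmult_1_l Rmult_comm. by [].
Qed.

Arguments opnorm_vec {n N M C}.

Lemma decay D c v : 0 < c -> 0 <= v -> (forall t, 0 <= t -> v <= D * exp (- c * t)) -> v = 0.
Proof.
move=> Hc Hv H.
case: (Rle_lt_or_eq_dec _ _ Hv) => // Hp.
have HD : v <= D. have := H 0 (Rle_refl 0). by rewrite Rmult_0_r exp_0 Rmult_1_r.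
have Hq : 1 < 2 * D / v.
  apply (Rmult_lt_reg_r v); first lra. unfold Rdiv. rewrite Rmult_assoc Rinv_l; lra.
have Ht : 0 <= ln (2 * D / v) / c.
  apply Rmult_le_pos; last by left; apply Rinv_0_lt_compat.
  rewrite -ln_1. left. apply ln_increasing; lra.
have := H _ Ht.
have -> : - c * (ln (2 * D / v) / c) = - ln (2 * D / v) by field; lra.
rewrite exp_Ropp exp_ln; last lra.
have -> : D * / (2 * D / v) = v / 2 by field; lra.
lra.
Qed.
Unset Implicit Arguments.

Theorem mainTheorem1 (n : nat) (Hn : (0 < n)%N) (N : 'cV[R]_n -> R)
  (A Phi : R -> 'M[R]_n) (K alpha mu K0 a eps : R) :
  is_norm N ->
  continuous_on_Rplus A ->
  fundamental_matrix A Phi ->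
  nonuniform_exp_dichotomy N Phi K alpha mu ->
  nonuniform_bounded_growth N Phi K0 a eps ->
  a + Rmax mu eps >= alpha.
Proof.
move=> HN _ [Hunit _] [P [HK [Hal [Hmu [Hma [HPP [Hcom [Hs Hu]]]]]]]] [HK0 [Ha [Heps Hg]]].
apply Rnot_lt_ge => Hlt.
have Hme : a + eps < alpha by have := Rmax_r mu eps; lra.
have Hmm : a + mu < alpha by have := Rmax_l mu eps; lra.
have Hinv : forall t, 0 <= t -> (evol Phi 0 t *m evol Phi t 0 = 1%:M)%R.
  move=> t Ht. rewrite /evol mulmxA -(mulmxA (Phi 0)) mulVmx ?Hunit //.
  by rewrite mulmx1 mulmxV ?Hunit //; apply Rle_refl.
have [H0 [H1 [H2 H3]]] := HN.
set x : 'cV[R]_n := const_mx 1.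
have Hx : 0 < N x.
  case: (Rle_lt_or_eq_dec _ _ (H0 x)) => // /esym /H1 Hx0.
  exfalso. have := congr1 (fun m : 'cV[R]_n => m (Ordinal Hn) ord0) Hx0.
  rewrite /x mxE mxE. exact: R1_neq_R0.
set y := (P 0 *m x)%R.
set z := ((1%:M - P 0) *m x)%R.
have Hy : N y = 0.
  apply: (@decay (K0 * K * N x) (alpha - a - eps)); [lra | exact: H0 |].
  move=> t Ht.
  have -> : y = (evol Phi 0 t *m ((evol Phi t 0 *m P 0) *m x))%R.
    by rewrite (mulmxA (evol Phi 0 t)) (mulmxA (evol Phi 0 t)) Hinv // mul1mx.
  apply: Rle_trans; first exact: (opnorm_vec HN (Hg 0 t (Rle_refl 0) Ht)).
  have B := opnorm_vec HN (Hs t 0 (Rle_refl 0) Ht) x.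
  have E1 : 0 <= K0 * exp (a * Rabs (0 - t) + eps * t).
    apply Rmult_le_pos; [lra | left; apply exp_pos].
  apply: Rle_trans; first exact: (Rmult_le_compat_l _ _ _ E1 B).
  rewrite Rabs_left1; last lra.
  have -> : - alpha * (t - 0) + mu * 0 = - alpha * t by ring.
  have -> : exp (- (alpha - a - eps) * t) = exp (a * - (0 - t) + eps * t) * exp (- alpha * t).
    rewrite -exp_plus. f_equal. ring.
  right; ring.
have Hz : N z = 0.
  apply: (@decay (K * K0 * N x) (alpha - a - mu)); [lra | exact: H0 |].
  move=> s Hs0.
  have -> : z = ((evol Phi 0 s *m (1%:M - P s)) *m (evol Phi s 0 *m x))%R.
    rewrite -mulmxA (mulmxA (1%:M - P s)) mulmxBl mul1mx Hcom //; last exact: Rle_refl.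
    by rewrite -{1}(mulmx1 (evol Phi s 0)) -mulmxBr (mulmxA (evol Phi 0 s)) (mulmxA (evol Phi 0 s)) Hinv // mul1mx.
  apply: Rle_trans; first exact: (opnorm_vec HN (Hu 0 s (Rle_refl 0) Hs0)).
  have B := opnorm_vec HN (Hg s 0 Hs0 (Rle_refl 0)) x.
  have E1 : 0 <= K * exp (alpha * (0 - s) + mu * s).
    apply Rmult_le_pos; [lra | left; apply exp_pos].
  apply: Rle_trans; first exact: (Rmult_le_compat_l _ _ _ E1 B).
  rewrite Rabs_pos_eq; last lra.
  have -> : exp (- (alpha - a - mu) * s) = exp (alpha * (0 - s) + mu * s) * exp (a * (s - 0) + eps * 0).
    rewrite -exp_plus. f_equal. ring.
  right; ring.
have Exyz : x = (y + z)%R by rewrite /y /z -mulmxDl GRing.addrC GRing.subrK mul1mx.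
have := H3 y z. rewrite -Exyz Hy Hz. lra.
Qed.
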